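(* Let $A$, $I$ and $d$ be fixed positive integers with $d<\min\{I,A-1\}$. Let $\mathbb{P}(C)$ be the probability that a profile chosen uniformly at random from $\mathcal{P}_{A,I}$ contains a circulant pathology of size $k\geq d+2$. Then $$\mathbb{P}(C) \geq 1 - \left(1 - \sum_{k=d+2}^{I} B_k \right)^{\left\lfloor \frac{A}{d+2} \right\rfloor},$$ where $$B_k=\binom{I}{k} \genfrac\{\}{0pt}{0}{k}{d+2} (d+2)! \left(\frac{1}{(d+2)!}\right)^k \left(1 - \frac{d+2}{(d+2)!}\right)^{I-k}$$ and $\genfrac\{\}{0pt}{1}{k}{d+2}$ denotes a Stirling number of the second kind.
   Context: There are $A$ alternatives and $I$ individuals. A preference is a strict total order (ranking without ties) on the $A$ alternatives; $a>_i b$ means individual $i$ prefers $a$ to $b$. A profile assigns a preference to each of the $I$ individuals; $\mathcal{P}_{A,I}$ is the set of all profiles, so a uniformly random profile assigns to each individual an independent uniformly random preference among the $A!$ possible ones. A circulant pathology of size $k$ in a profile consists of $k$ distinct alternatives $a_1,\dots,a_k$ and $k$ distinct individuals $1,\dots,k$ such that for each $j\in\{1,\dots,k\}$, individual $j$'s preference restricted to $\{a_1,\dots,a_k\}$ is $a_j >_j a_{j+1} >_j \dots >_j a_k >_j a_1 >_j \dots >_j a_{j-1}$ (the cyclic shift of $a_1>\dots>a_k$ starting at $a_j$). *)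

(* Defs.v *)
From mathcomp Require Import all_boot all_order all_algebra all_fingroup.
From mathcomp Require Import boolp.
Set Implicit Arguments. Unset Strict Implicit. Unset Printing Implicit Defensive.
Import GRing.Theory Num.Theory.

Fixpoint stirling2 (n k : nat) : nat :=
  match n, k with
  | 0, 0 => 1
  | 0, _.+1 => 0
  | _.+1, 0 => 0
  | n'.+1, k'.+1 => k'.+1 * stirling2 n' k'.+1 + stirling2 n' k'
  end.

(* A preference on the A alternatives 'I_A is encoded by a permutation
   sigma : {perm 'I_A} giving the rank of each alternative (rank 0 = best):
   a >_sigma b  iff  sigma a < sigma b.  This is a bijection between
   {perm 'I_A} and strict total orders on 'I_A. *)
Definition prefers (A : nat) (sigma : {perm 'I_A}) (a b : 'I_A) : bool :=
  (sigma a < sigma b)%N.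

Definition profile (A I : nat) := {ffun 'I_I -> {perm 'I_A}}.

Definition circulant_pathology (A I : nat) (P : profile A I) (k : nat) : Prop :=
  exists (a : nat -> 'I_A) (ind : nat -> 'I_I),
    {in [pred x | (x < k)%N] &, injective a} /\
    {in [pred x | (x < k)%N] &, injective ind} /\
    forall j t u, (j < k)%N -> (t < u)%N -> (u < k)%N ->
      prefers (P (ind j)) (a ((j + t) %% k)) (a ((j + u) %% k)).

Definition prob_circ (A I m : nat) : rat :=
  (#|[set P : profile A I |
       `[< exists k, (m <= k)%N /\ circulant_pathology P k >]]|%:R
   / #|[set: profile A I]|%:R)%R.

Local Open Scope ring_scope.

Definition Bk (I d k : nat) : rat :=
  ('C(I, k))%:R * (stirling2 k d.+2)%:R * (d.+2)`!%:R
  * (1 / (d.+2)`!%:R) ^+ k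
  * (1 - d.+2%:R / (d.+2)`!%:R) ^+ (I - k).

(* Main.v *)
Require Import Defs.
From mathcomp Require Import all_boot all_order all_algebra all_fingroup.
From mathcomp Require Import boolp.
From mathcomp Require Import zify ring lra.
Set Implicit Arguments. Unset Strict Implicit. Unset Printing Implicit Defensive.
Import GRing.Theory Num.Theory.


Definition sj (k t : nat) := (t`! * stirling2 k t)%N.

Lemma sjS k t : sj k.+1 t = (t * (sj k t + sj k t.-1))%N.
Proof.
case: t => [|t]; first by rewrite /sj /= !muln0 mul0n.
rewrite /sj /= factS. ring.
Qed.

Lemma sj0 t : sj 0 t = (t == 0%N).
Proof. by case: t => [|t]; rewrite /sj /= ?muln0. Qed.

Definition hs (I t u : nat) : nat :=
  (\sum_(0 <= k < I.+1) 'C(I, k) * sj k t * u ^ (I - k))%N.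

Lemma hs0 t u : hs 0 t u = (t == 0%N).
Proof. by rewrite /hs big_nat1 sj0 bin0 mul1n muln1. Qed.

Lemma hsS I t u : hs I.+1 t u = ((u + t) * hs I t u + t * hs I t.-1 u)%N.
Proof.
have E1 : (\sum_(0 <= k < I.+1) 'C(I, k.+1) * sj k.+1 t * u ^ (I - k)
           + 'C(I.+1, 0) * sj 0 t * u ^ (I.+1 - 0) = u * hs I t u)%N.
  rewrite /hs big_nat_recr //= bin_small // mul0n !mul0n addn0.
  rewrite big_nat_recl // mulnDr addnC; congr (_ + _)%N.
    by rewrite !bin0 !subn0 expnS; ring.
  rewrite big_distrr /=; apply: eq_big_nat => k /andP[_ hk].
  by rewrite -(subnSK hk) expnS; ring.
have E2 : (\sum_(0 <= k < I.+1) 'C(I, k) * sj k.+1 t * u ^ (I - k)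
           = t * hs I t u + t * hs I t.-1 u)%N.
  rewrite /hs !big_distrr -big_split /=; apply: eq_big_nat => k _.
  by rewrite sjS; ring.
rewrite /hs big_nat_recl //.
under eq_big_nat => k _ do rewrite binS subSS mulnDl mulnDl.
rewrite big_split /= -/(hs I t u) addnCA E2 addnA.
rewrite E1 -/(hs I t.-1 u); ring.
Qed.

Lemma hs_shift I s u : hs I s u.+1 = (hs I s.+1 u + hs I s u)%N.
Proof.
elim: I s => [|I IH] s; first by rewrite !hs0; case: s.
rewrite !hsS; case: s => [|s] /=; rewrite ?IH; ring.
Qed.

Lemma card_sumb (T : finType) (P : pred T) : #|[set x | P x]| = (\sum_x (P x : nat))%N.
Proof.
rewrite -sum1_card big_mkcond /=; apply: eq_bigr => x _.
by rewrite inE; case: (P x).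
Qed.

Section Count.
Variable X : finType.

Definition fcons I (x : X) (g : {ffun 'I_I -> X}) : {ffun 'I_I.+1 -> X} :=
  [ffun i : 'I_I.+1 => if unlift ord0 i is Some j then g j else x].
Definition fdecons I (g : {ffun 'I_I.+1 -> X}) : X * {ffun 'I_I -> X} :=
  (g ord0, [ffun j => g (lift ord0 j)]).

Lemma fcons_bij I : bijective (fun p : X * {ffun 'I_I -> X} => fcons p.1 p.2).
Proof.
exists (@fdecons I).
  move=> [x g]; rewrite /fdecons /fcons /= ffunE unlift_none; congr (_, _).
  by apply/ffunP => j; rewrite !ffunE liftK.
move=> g; apply/ffunP => i; rewrite /fdecons /fcons /= ffunE.
by case: unliftP => [j ->|->] //=; rewrite ffunE.
Qed.

Lemma mem_codom_fcons I x (g : {ffun 'I_I -> X}) y :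
  (y \in codom (fcons x g)) = (y == x) || (y \in codom g).
Proof.
apply/codomP/orP => [[i ->]|[/eqP ->|/codomP [j ->]]].
- rewrite /fcons ffunE; case: unliftP => [j _|_]; last by left.
  by right; apply/codomP; exists j.
- by exists ord0; rewrite /fcons ffunE unlift_none.
- by exists (lift ord0 j); rewrite /fcons ffunE liftK.
Qed.

Lemma count_hit I (T : {set X}) :
  #|[set g : {ffun 'I_I -> X} | T \subset codom g]| = hs I #|T| (#|X| - #|T|).
Proof.
elim: I T => [|I IH] T.
  rewrite hs0; case: (set_0Vmem T) => [->|[x xT]].
    rewrite cards0 /=.
    have -> : [set g : {ffun 'I_0 -> X} | set0 \subset codom g] = setT.
      by apply/setP => g; rewrite !inE; apply/subsetP => y; rewrite inE.
    by rewrite cardsT card_ffun card_ord.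
  have -> : (#|T| == 0%N) = false by apply/negbTE; rewrite -lt0n; apply/card_gt0P; exists x.
  apply/eqP; rewrite cards_eq0; apply/eqP/setP => g; rewrite !inE.
  apply/negbTE/negP => /subsetP /(_ x xT) /codomP [[i hi]]; by [].
rewrite card_sumb (reindex _ (onW_bij _ (@fcons_bij I))) /=.
rewrite -(pair_bigA _ (fun x g => (T \subset codom (fcons x g)) : nat)) /=.
have E : forall x, (\sum_(g : {ffun 'I_I -> X}) (T \subset codom (fcons x g) : nat))%N
     = hs I #|T :\ x| (#|X| - #|T :\ x|).
  move=> x; rewrite -IH card_sumb; apply: eq_bigr => g _; congr nat_of_bool.
  apply/subsetP/subsetP => H y.
    by rewrite !inE => /andP[yx /H]; rewrite mem_codom_fcons (negbTE yx).
  rewrite mem_codom_fcons => yT; case: eqP => //= yx; apply: H.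
  by rewrite !inE yT andbT; apply/eqP.
rewrite (eq_bigr _ (fun x _ => E x)) (bigID (mem T)) /=.
have tM : (#|T| <= #|X|)%N by apply: max_card.
rewrite (eq_bigr (fun _ => hs I #|T|.-1 (#|X| - #|T|).+1)); last first.
  move=> x xT; have hc := cardsD1 x T; rewrite xT add1n in hc.
  rewrite hc /= subnS prednK // subn_gt0; apply: leq_trans tM; by rewrite hc.
rewrite [X in (_ + X)%N](eq_bigr (fun _ => hs I #|T| (#|X| - #|T|))); last first.
  move=> x xT; have -> // : T :\ x = T.
  by apply/setP => y; rewrite !inE; case: eqP => // ->; rewrite (negbTE xT).
rewrite !sum_nat_const hsS.
have -> : #|[pred x | ~~ mem T x]| = (#|X| - #|T|)%N.
  by rewrite -(cardC (mem T)) addKn.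
case: #|T| tM => [|t] tM /=; rewrite ?hs_shift; try ring.
Qed.

End Count.

Lemma stirling_small k t : (k < t)%N -> stirling2 k t = 0%N.
Proof.
elim: k t => [|k IH] [|t] //= hk.
by rewrite !IH ?muln0 // ltnW.
Qed.

Lemma n_le_fact n : (n <= n`!)%N.
Proof. by case: n => // n; rewrite factS leq_pmulr // fact_gt0. Qed.

Section RatPart.
Local Open Scope ring_scope.

Lemma sumBk I d :
  (\sum_(d.+2 <= k < I.+1) Bk I d k) * ((d.+2)`!%:R) ^+ I
  = (hs I d.+2 ((d.+2)`! - d.+2))%:R :> rat.
Proof.
set n := d.+2; set M := n`!.
have M0 : (M%:R : rat) != 0 by rewrite pnatr_eq0 -lt0n fact_gt0.
rewrite big_distrl /= big_geq_mkord /hs natr_sum big_mkord big_mkcond /=.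
apply: eq_bigr => [[k hk]] _ /=.
case: (leqP n k) => hnk; last by rewrite /sj stirling_small // !muln0 !mul0n.
have kI : (k <= I)%N by [].
rewrite (_ : (M%:R : rat) ^+ I = M%:R ^+ k * M%:R ^+ (I - k)); last by rewrite -exprD subnKC.
have ha : (1 / M%:R) ^+ k * M%:R ^+ k = 1 :> rat by rewrite -exprMn mul1r mulVf ?expr1n.
have hb : (1 - n%:R / M%:R) ^+ (I - k) * M%:R ^+ (I - k) = ((M - n)%N%:R) ^+ (I - k) :> rat.
  by rewrite -exprMn mulrBl mul1r mulfVK // natrB // n_le_fact.
rewrite /Bk /sj -/n -/M; clearbody M; rewrite !natrM natrX -hb.
transitivity ('C(I, k)%:R * (stirling2 k n)%:R * M%:R * ((1 / M%:R) ^+ k * M%:R ^+ k)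
   * ((1 - n%:R / M%:R) ^+ (I - k) * M%:R ^+ (I - k)) : rat); first ring.
rewrite ha; ring.
Qed.

End RatPart.



Lemma incr_ge N (f : 'I_N -> 'I_N) :
  (forall t u : 'I_N, (t < u)%N -> (f t < f u)%N) -> forall t : 'I_N, (t <= f t)%N.
Proof.
move=> H; suff S : forall k (hk : (k < N)%N), (k <= f (Ordinal hk))%N.
  by case=> k hk; apply: S.
elim=> [|k IH] hk //.
have hk' : (k < N)%N by apply: ltnW.
have := IH hk'; have := H (Ordinal hk') (Ordinal hk) (ltnSn k).
move=> /= h1 h2; exact: leq_ltn_trans h2 h1.
Qed.

Lemma incr_perm_id N (rho : {perm 'I_N}) :
  (forall t u : 'I_N, (t < u)%N -> (rho t < rho u)%N) -> rho = 1%g.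
Proof.
move=> H; have H1 := incr_ge H.
have H2 : forall t u : 'I_N, (t < u)%N -> ((rho^-1)%g t < (rho^-1)%g u)%N.
  move=> t u tu; case: (ltngtP ((rho^-1)%g t) ((rho^-1)%g u)) => // h.
    have := H _ _ h; rewrite !permKV => h'.
    by have := ltn_trans tu h'; rewrite ltnn.
  by move/val_inj/perm_inj: h => e; rewrite e ltnn in tu.
have H3 := incr_ge H2.
apply/permP => t; rewrite perm1; apply/val_inj/eqP; rewrite eqn_leq H1 andbT.
by have := H3 (rho t); rewrite permK.
Qed.

Lemma rank_perm N (key : 'I_N -> nat) : injective key ->
  exists rho : {perm 'I_N}, forall r r', (key r < key r')%N = (rho r < rho r')%N.
Proof.
move=> kinj.
pose S r := [set r' | (key r' < key r)%N].
have rkl : forall r, (#|S r| < N)%N.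
  move=> r; rewrite -[X in (_ < X)%N]card_ord -cardsT; apply: proper_card.
  rewrite properT; apply/eqP => E; have : r \in S r by rewrite E inE.
  by rewrite inE ltnn.
have mono : forall r r', (key r < key r')%N -> (#|S r| < #|S r'|)%N.
  move=> r r' h; apply: proper_card; apply/properP; split.
    by apply/subsetP => x; rewrite !inE => hx; apply: ltn_trans hx h.
  by exists r; rewrite !inE ?ltnn.
pose rk r := Ordinal (rkl r).
have rkinj : injective rk.
  move=> r r' /(congr1 val) /= E; apply: kinj.
  case: (ltngtP (key r) (key r')) => // h.
    by have := mono _ _ h; rewrite E ltnn.
  by have := mono _ _ h; rewrite E ltnn.
exists (perm rkinj) => r r'; rewrite !permE /=.
case: (ltngtP (key r) (key r')) => h.
- by rewrite mono.
- by apply/esym/negbTE; rewrite -leqNgt ltnW // mono.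
- by rewrite (kinj _ _ h) ltnn.
Qed.

Lemma card_forall (J Y : finType) (F : J -> pred Y) :
  #|[set z : {ffun J -> Y} | [forall b, F b (z b)]]| = (\prod_b #|[set y | F b y]|)%N.
Proof.
rewrite (@card_sumb _ (fun z : {ffun J -> Y} => [forall b, F b (z b)])).
under [RHS]eq_bigr => b _ do rewrite (@card_sumb _ (F b)).
rewrite bigA_distr_bigA /=; apply: eq_bigr => z _.
case: (boolP [forall b, F b (z b)]) => H.
  by rewrite big1 // => b _; rewrite (forallP H b).
by move/forallPn: H => [b Hb]; rewrite (bigD1 b) //= (negbTE Hb) mul0n.
Qed.

Section Blocks.
Variables (A I m d : nat).
Hypothesis hmn : (m * d.+2 <= A)%N.
Local Notation n := d.+2.

Lemma blk_lt (b : 'I_m) (r : 'I_n) : (b * n + r < A)%N.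
Proof.
apply: (@leq_trans (b.+1 * n)); first by rewrite mulSn addnC ltn_add2r.
by apply: leq_trans hmn; rewrite leq_mul2r ltn_ord orbT.
Qed.

Definition blk (b : 'I_m) (r : 'I_n) : 'I_A := Ordinal (blk_lt b r).

Lemma blk_inj b r b' r' : blk b r = blk b' r' -> b = b' /\ r = r'.
Proof.
move/(congr1 val) => /= E.
have Ed := congr1 (fun x => x %/ n)%N E; have Em := congr1 (fun x => x %% n)%N E.
rewrite /= !divnMDl // !divn_small // !addn0 in Ed.
rewrite /= !modnMDl !modn_small // in Em.
by split; apply: val_inj.
Qed.

Definition extf (h : {ffun 'I_m -> {perm 'I_n}}) (x : 'I_A) : 'I_A :=
  if [pick z : 'I_m * 'I_n | blk z.1 z.2 == x] is Some z then blk z.1 (h z.1 z.2) else x.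

Lemma extf_blk h b r : extf h (blk b r) = blk b (h b r).
Proof.
rewrite /extf; case: pickP => [[b' r'] /eqP /= E | N].
  by case: (blk_inj E) => -> ->.
by have := N (b, r); rewrite /= eqxx.
Qed.

Lemma extf_inj h : injective (extf h).
Proof.
move=> x y; rewrite /extf.
case: pickP => [[b r] /eqP /= Ex | Nx]; case: pickP => [[b' r'] /eqP /= Ey | Ny] //=.
- move=> E; case: (blk_inj E) => eb; subst b' => /perm_inj er; subst r'.
  by rewrite -Ex -Ey.
- by move=> E; have := Ny (b, h b r); rewrite /= E eqxx.
- by move=> E; have := Nx (b', h b' r'); rewrite /= -E eqxx.
Qed.

Definition ext h : {perm 'I_A} := perm (@extf_inj h).

Lemma ext_blk h b r : ext h (blk b r) = blk b (h b r).
Proof. by rewrite permE extf_blk. Qed.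

Definition sh (j t : 'I_n) : 'I_n := inord ((j + t) %% n).

Lemma sh_val j t : (sh j t : nat) = ((j + t) %% n)%N.
Proof. by rewrite inordK // ltn_pmod. Qed.

Lemma sh_inj j : injective (sh j).
Proof.
move=> t t' /(congr1 (@nat_of_ord _)); rewrite !sh_val => /eqP.
rewrite eqn_modDl !modn_small // => /eqP E; exact: val_inj.
Qed.

Definition rot j : {perm 'I_n} := perm (@sh_inj j).

Definition qb (pi : {perm 'I_n}) (j : 'I_n) : bool :=
  [forall t : 'I_n, forall u : 'I_n, (t < u)%N ==> (pi (sh j t) < pi (sh j u))%N].

Lemma qbE pi j : qb pi j = (pi == (rot j)^-1)%g.
Proof.
apply/idP/eqP => [H | ->].
  have : (rot j * pi = 1)%g.
    apply: incr_perm_id => t u tu; rewrite !permM !permE.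
    by have := forallP (forallP H t) u; rewrite tu.
  by move=> E; rewrite -(mul1g pi) -(mulVg (rot j)) -mulgA E mulg1.
apply/forallP => t; apply/forallP => u; apply/implyP => tu.
by rewrite -!(permE (@sh_inj j)) -/(rot j) !permK.
Qed.

Definition prefersb (s : {perm 'I_A}) (x y : 'I_A) := prefers s x y.

Definition realizeb (s : {perm 'I_A}) (b : 'I_m) (j : 'I_n) : bool :=
  [forall t : 'I_n, forall u : 'I_n,
     (t < u)%N ==> prefers s (blk b (sh j t)) (blk b (sh j u))].

Lemma rho_ex (s : {perm 'I_A}) (b : 'I_m) : exists rho : {perm 'I_n},
  [forall r, forall r', (s (blk b r) < s (blk b r'))%N == (rho r < rho r')%N].
Proof.
have kinj : injective (fun r => (s (blk b r) : nat)).
  by move=> r r' /val_inj /perm_inj E; case: (blk_inj E).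
have [rho H] := rank_perm kinj.
by exists rho; apply/forallP => r; apply/forallP => r'; rewrite H.
Qed.

Definition rho s b : {perm 'I_n} := xchoose (rho_ex s b).

Lemma rhoP (s : {perm 'I_A}) b r r' : (s (blk b r) < s (blk b r'))%N = (rho s b r < rho s b r')%N.
Proof. by have := xchooseP (rho_ex s b) => /forallP /(_ r) /forallP /(_ r') /eqP. Qed.

Lemma realize_ext h (s : {perm 'I_A}) b j :
  realizeb (ext h * s)%g b j = qb (h b * rho s b)%g j.
Proof.
apply: eq_forallb => t; apply: eq_forallb => u.
by rewrite /prefers !permM !ext_blk rhoP.
Qed.

Definition goodq (g : {ffun 'I_I -> {perm 'I_n}}) : bool :=
  [forall j : 'I_n, [exists i : 'I_I, qb (g i) j]].

Definition Tset : {set {perm 'I_n}} := [set (rot j)^-1 | j : 'I_n]%g.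

Lemma rot0 j : rot j ord0 = j.
Proof. by rewrite permE; apply: val_inj; rewrite /= sh_val addn0 modn_small. Qed.

Lemma card_Tset : #|Tset| = n.
Proof.
rewrite card_imset ?card_ord // => j j' /invg_inj E.
by rewrite -(rot0 j) -(rot0 j') E.
Qed.

Lemma goodq_hit g : goodq g = (Tset \subset codom g).
Proof.
apply/forallP/subsetP => [H x /imsetP [j _ ->] | H j].
  have [i] := existsP (H j); rewrite qbE => /eqP <-.
  by apply/codomP; exists i.
have hT : ((rot j)^-1)%g \in Tset by apply/imsetP; exists j.
have /codomP [i Ei] := H _ hT.
by apply/existsP; exists i; rewrite qbE -Ei.
Qed.

Lemma card_goodq :
  #|[set g : {ffun 'I_I -> {perm 'I_n}} | goodq g]| = hs I n (n`! - n).
Proof.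
have -> : [set g : {ffun 'I_I -> {perm 'I_n}} | goodq g]
   = [set g : {ffun 'I_I -> {perm 'I_n}} | Tset \subset codom g].
  by apply/setP => g; rewrite !inE goodq_hit.
by rewrite count_hit card_Tset card_Sn.
Qed.

Definition good_block (P : profile A I) (b : 'I_m) : bool :=
  [forall j : 'I_n, [exists i : 'I_I, realizeb (P i) b j]].
Definition bad (P : profile A I) : bool := [forall b : 'I_m, ~~ good_block P b].

Definition actP (P : {ffun 'I_I -> {perm 'I_A}})
  (z : {ffun 'I_m -> {ffun 'I_I -> {perm 'I_n}}}) : {ffun 'I_I -> {perm 'I_A}} :=
  [ffun i => (ext [ffun b => z b i] * P i)%g].

Lemma actP_inj z : injective (fun P => actP P z).
Proof.
move=> P Q /= /ffunP E; apply/ffunP => i; have := E i; rewrite !ffunE; exact: mulgI.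
Qed.

Lemma good_act P z b :
  good_block (actP P z) b = goodq [ffun i => (z b i * rho (P i) b)%g].
Proof.
rewrite /good_block /goodq; apply: eq_forallb => j; apply: eq_existsb => i.
by rewrite !ffunE realize_ext ffunE.
Qed.

Definition Badc := #|[set g : {ffun 'I_I -> {perm 'I_n}} | ~~ goodq g]|.

Lemma count_z (P : {ffun 'I_I -> {perm 'I_A}}) :
  #|[set z : {ffun 'I_m -> {ffun 'I_I -> {perm 'I_n}}} | bad (actP P z)]| = (Badc ^ m)%N.
Proof.
have -> : [set z : {ffun 'I_m -> {ffun 'I_I -> {perm 'I_n}}} | bad (actP P z)]
  = [set z : {ffun 'I_m -> {ffun 'I_I -> {perm 'I_n}}} |
       [forall b, (fun b g => ~~ goodq [ffun i => (g i * rho (P i) b)%g]) b (z b)]].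
  by apply/setP => z; rewrite !inE; apply: eq_forallb => b; rewrite good_act.
rewrite (@card_forall _ _ (fun b (g : {ffun 'I_I -> {perm 'I_n}}) =>
            ~~ goodq [ffun i => (g i * rho (P i) b)%g])).
rewrite (eq_bigr (fun _ => Badc)); first by rewrite prod_nat_const card_ord.
move=> b _; rewrite /Badc !card_sumb.
have Finj : injective (fun g : {ffun 'I_I -> {perm 'I_n}} =>
                           [ffun i => (g i * rho (P i) b)%g]).
  move=> g g' /ffunP E; apply/ffunP => i; have := E i; rewrite !ffunE; exact: mulIg.
by rewrite [RHS](reindex_inj Finj).
Qed.

Lemma double_count :
  (#|[set P : {ffun 'I_I -> {perm 'I_A}} | bad P]|
     * #|{ffun 'I_m -> {ffun 'I_I -> {perm 'I_n}}}|)%N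
  = (#|{ffun 'I_I -> {perm 'I_A}}| * Badc ^ m)%N.
Proof.
transitivity (\sum_(z : {ffun 'I_m -> {ffun 'I_I -> {perm 'I_n}}})
                \sum_(P : {ffun 'I_I -> {perm 'I_A}}) (bad (actP P z) : nat))%N.
  rewrite (eq_bigr (fun _ => #|[set P : {ffun 'I_I -> {perm 'I_A}} | bad P]|)).
    by rewrite sum_nat_const mulnC; congr (_ * _)%N; apply: eq_card.
  by move=> z _; rewrite card_sumb [RHS](reindex_inj (@actP_inj z)).
rewrite exchange_big /=.
rewrite (eq_bigr (fun _ => Badc ^ m)%N); first by rewrite sum_nat_const.
by move=> P _; rewrite -(count_z P) card_sumb.
Qed.

Lemma sh_hit (j j' : 'I_n) : j != j' -> exists u : 'I_n, (0 < u)%N /\ sh j u = j'.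
Proof.
move=> jj'; case: (ltngtP j j') => h; last by rewrite (val_inj h) eqxx in jj'.
- have hu : (j' - j < n)%N by apply: leq_ltn_trans (leq_subr _ _) _.
  exists (Ordinal hu); split; first by rewrite /= subn_gt0.
  apply: val_inj; rewrite /= sh_val subnKC; last exact: ltnW.
  by rewrite modn_small.
- have jn := ltn_ord j; have jn' := ltn_ord j'.
  have hu : (j' + n - j < n)%N by lia.
  exists (Ordinal hu); split; first by rewrite /=; lia.
  apply: val_inj; rewrite /= sh_val.
  have -> : (j + (j' + n - j) = j' + n)%N by lia.
  by rewrite modnDr modn_small.
Qed.

Lemma sh0 (j : 'I_n) : sh j ord0 = j.
Proof. by apply: val_inj; rewrite /= sh_val addn0 modn_small. Qed.

Lemma realize_uniq (s : {perm 'I_A}) b j j' :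
  realizeb s b j -> realizeb s b j' -> j = j'.
Proof.
move=> Hj Hj'; case: (eqVneq j j') => // jj'.
have jj2 : j' != j by rewrite eq_sym.
have [u [u0 Eu]] := sh_hit jj'.
have [u' [u0' Eu']] := sh_hit jj2.
have := forallP (forallP Hj ord0) u; rewrite u0 /= sh0 Eu /prefers => h1.
have := forallP (forallP Hj' ord0) u'; rewrite u0' /= sh0 Eu' /prefers => h2.
by have := ltn_trans h1 h2; rewrite ltnn.
Qed.

Lemma good_circ (P : profile A I) b : good_block P b -> circulant_pathology P n.
Proof.
move=> /forallP H.
have [i0 _] := existsP (H ord0).
pose a x := blk b (inord x).
pose ind x := if [pick i | realizeb (P i) b (inord x)] is Some i then i else i0.
have Rind : forall x, realizeb (P (ind x)) b (inord x).
  move=> x; rewrite /ind; case: pickP => [i //|N].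
  by have [i Hi] := existsP (H (inord x)); have := N i; rewrite Hi.
exists a, ind; split; [|split].
- move=> x y; rewrite !inE => hx hy /blk_inj [_ E].
  by have := congr1 (@nat_of_ord _) E; rewrite !inordK.
- move=> x y; rewrite !inE => hx hy E.
  have := Rind y; rewrite -E => Ry.
  by have := congr1 (@nat_of_ord _) (realize_uniq (Rind x) Ry); rewrite !inordK.
- move=> j t u hj htu hu.
  have ht : (t < n)%N by apply: ltn_trans hu.
  have := forallP (forallP (Rind j) (inord t)) (inord u).
  rewrite !inordK // htu /=.
  by rewrite /a /sh !inordK.
Qed.

End Blocks.


Unset Implicit Arguments.
Local Open Scope ring_scope.

Theorem theorem3 (A I d : nat) (hA : (0 < A)%N) (hI : (0 < I)%N) (hd : (0 < d)%N)
  (hdmin : (d < minn I (A - 1))%N) :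
  1 - (1 - \sum_(d.+2 <= k < I.+1) Bk I d k) ^+ (A %/ d.+2) <= prob_circ A I d.+2.
Proof.
set n := d.+2; set m := (A %/ n)%N.
have hmn : (m * n <= A)%N by apply: leq_divM.
set S := \sum_(d.+2 <= k < I.+1) Bk I d k.
have hS := sumBk I d; rewrite -/S -/n in hS.
set Bc := Badc I d.
set Gc := #|[set g : {ffun 'I_I -> {perm 'I_n}} | goodq g]|.
have hG : Gc = hs I n (n`! - n) by rewrite /Gc (card_goodq I d).
have hBG : (Bc + Gc = n`! ^ I)%N.
  rewrite /Bc /Badc /Gc.
  have -> : [set g : {ffun 'I_I -> {perm 'I_n}} | ~~ goodq g]
          = ~: [set g : {ffun 'I_I -> {perm 'I_n}} | goodq g].
    by apply/setP => g; rewrite !inE.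
  by rewrite addnC cardsC card_ffun card_Sn card_ord.
set Nb := #|[set P : {ffun 'I_I -> {perm 'I_A}} | bad hmn P]|.
set N := #|{ffun 'I_I -> {perm 'I_A}}|.
have hD := double_count I hmn.
rewrite -/Nb -/N -/Bc card_ffun card_ffun card_Sn !card_ord in hD.
have N0 : (0 < N)%N by rewrite /N card_ffun card_Sn expn_gt0 fact_gt0.
have M0 : (0 < n`! ^ I)%N by rewrite expn_gt0 fact_gt0.
have hS' : S = Gc%:R / (n`! ^ I)%:R.
  by rewrite hG -hS natrX mulfK // expf_neq0 // pnatr_eq0 -lt0n fact_gt0.
have h1S : 1 - S = Bc%:R / (n`! ^ I)%:R.
  by rewrite hS' -{1}(@divff _ (n`! ^ I)%:R) ?pnatr_eq0 -?lt0n // -mulrBl -hBG natrD addrK.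
have hpow : (1 - S) ^+ m = Nb%:R / N%:R.
  rewrite h1S expr_div_n -!natrX.
  apply/eqP; rewrite eqr_div ?pnatr_eq0 -?lt0n ?expn_gt0 ?fact_gt0 //.
  by rewrite -!natrM mulnC -hD.
rewrite hpow /prob_circ cardsT -/N.
rewrite -{1}(@divff _ N%:R) ?pnatr_eq0 -?lt0n // -mulrBl.
apply: ler_wpM2r; first by rewrite invr_ge0 ler0n.
rewrite lerBlDr -natrD ler_nat.
set C := [set P : profile A I | `[< exists k, (n <= k)%N /\ circulant_pathology P k >]].
have hsub : [set P : {ffun 'I_I -> {perm 'I_A}} | ~~ bad hmn P] \subset C.
  apply/subsetP => P; rewrite !inE => /forallPn [b /negPn Hb].
  apply/asboolP; exists n; split => //; exact: good_circ Hb.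
apply: leq_trans (leq_add (subset_leq_card hsub) (leqnn Nb)).
have -> : [set P : {ffun 'I_I -> {perm 'I_A}} | ~~ bad hmn P]
        = ~: [set P : {ffun 'I_I -> {perm 'I_A}} | bad hmn P].
  by apply/setP => P; rewrite !inE.
by rewrite addnC cardsC.
Qed.
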